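(* Let $A=k_{p_{ij}}[x_1,\dots,x_n]$ and let $\tau$ be a mystic reflection of $A$. Then there exist distinct $i,j\in[n]$ and $\lambda\in k^\times$ such that $p_{ij}=-1$, $p_{is}=p_{js}$ for all $s\notin\{i,j\}$, $B(i)=\{i\}$, $B(j)=\{j\}$, and $\tau=\tau_{i,j,\lambda}$. In particular, up to conjugation by elementary transformations, $\tau$ is a standard mystic reflection $\tau_{i,j,1}$.
   Context: $k$ is an algebraically closed field of characteristic zero, $n\ge2$, $[n]=\{1,\dots,n\}$. $A=k_{p_{ij}}[x_1,\dots,x_n]$ is the $k$-algebra generated by $x_1,\dots,x_n$ with relations $x_jx_i=p_{ij}x_ix_j$ ($i<j$), nonzero $p_{ij}\in k$, $\deg x_i=1$; $p_{ii}=1$, $p_{ij}=p_{ji}^{-1}$ for $i>j$. $\mathrm{Aut}(A)$: graded algebra automorphisms. $g\in\mathrm{Aut}(A)$ is a quasi-reflection if $\sum_i\mathrm{tr}(g|_{A_i})t^i=\frac{1}{(1-t)^{n-1}(1-\lambda t)}$ for some $\lambda\ne1$. A mystic reflection of $A$ is a quasi-reflection $g$ of order $4$ for which there is a basis $y_1,\dots,y_n$ of $A_1$ with $g(y_j)=y_j$ for $j\le n-2$, $g(y_{n-1})=\sqrt{-1}\,y_{n-1}$, $g(y_n)=-\sqrt{-1}\,y_n$. The block of $i$ is $B(i)=\{i': p_{ij}=p_{i'j}\ \forall j\}$. An elementary transformation is a graded automorphism sending $x_i\mapsto x'_i$ where for each block $B_w$, $\{x'_i:i\in B_w\}$ is a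 basis of $\bigoplus_{i\in B_w}kx_i$. For $s,t\in[n]$ with $p_{st}=-1$ and $p_{sj}=p_{tj}$ for all $j\notin\{s,t\}$, and $\lambda\in k^\times$, the standard mystic reflection $\tau_{s,t,\lambda}$ is the automorphism with $\tau_{s,t,\lambda}(x_s)=\lambda x_t$, $\tau_{s,t,\lambda}(x_t)=-\lambda^{-1}x_s$, $\tau_{s,t,\lambda}(x_i)=x_i$ for $i\ne s,t$. *)

(* Defs.v *)
From HB Require Import structures.
From mathcomp Require Import all_boot all_order all_algebra.
Set Implicit Arguments. Unset Strict Implicit. Unset Printing Implicit Defensive.
Import Order.TTheory GRing.Theory Num.Theory.
Local Open Scope ring_scope.

(* Skew polynomial ring A = k_{p_ij}[x_1..x_n], generators indexed by 'I_n.
   p : 'I_n -> 'I_n -> k is the full matrix of parameters (p i i = 1,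
   p j i = (p i j)^-1, all nonzero); relation: x_j x_i = p i j x_i x_j.

   A_d has the PBW basis x^s = x_{s_1} ... x_{s_d}, s a nondecreasing
   d-tuple of indices.  A word x_{v_1} ... x_{v_d} equals
   skew_coef p v * x^{sort v}, where skew_coef p v is the product, over
   inversions k < l with v_l < v_k, of p v_l v_k. *)

Section Skew.
Variables (k : fieldType) (n : nat) (p : 'I_n -> 'I_n -> k).

Definition le_idx (a b : 'I_n) : bool := (a <= b)%N.

Definition pbw (d : nat) (s : d.-tuple 'I_n) : bool := sorted le_idx s.

Definition skew_coef (d : nat) (v : d.-tuple 'I_n) : k :=
  \prod_(a < d) \prod_(b < d | (a < b)%N && (tnth v b < tnth v a)%N)
     p (tnth v b) (tnth v a).

(* Coefficient of the basis monomial x^s (s pbw) in the product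
   y_0 y_1 ... y_{d-1}, where y_a = \sum_u Y a u x_u lies in A_1. *)
Definition prod_coef (d : nat) (Y : 'I_d -> 'I_n -> k) (s : d.-tuple 'I_n) : k :=
  \sum_(v : d.-tuple 'I_n | perm_eq v s)
     (\prod_(a < d) Y a (tnth v a)) * skew_coef v.

(* A linear map g on A_1 is encoded by a matrix M with
   g(x_i) = \sum_j M i j x_j  (row i = image of x_i). *)

(* M extends to a graded algebra automorphism of A: M invertible and the
   defining relations are preserved: g(x_j) g(x_i) = p i j g(x_i) g(x_j)
   in A_2 (A is quadratic, generated in degree 1). *)
Definition graded_aut (M : 'M[k]_n) : Prop :=
  M \in unitmx /\
  forall (i j : 'I_n) (s : 2.-tuple 'I_n), pbw s ->
    prod_coef (fun a u => M (if val a == 0%N then j else i) u) s =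
    p i j * prod_coef (fun a u => M (if val a == 0%N then i else j) u) s.

(* trace of g on A_d: diagonal coefficients in the PBW basis, where
   g(x^s) = g(x_{s_0}) ... g(x_{s_{d-1}}). *)
Definition trace_deg (M : 'M[k]_n) (d : nat) : k :=
  \sum_(s : d.-tuple 'I_n | pbw s) prod_coef (fun a u => M (tnth s a) u) s.

(* Coefficient of t^d in 1 / ((1-t)^(n-1) (1 - lam t)). *)
Definition qr_series_coef (lam : k) (d : nat) : k :=
  \sum_(m < d.+1) lam ^+ m * ('C(d - m + (n - 2), n - 2))%:R.

Definition quasi_reflection (M : 'M[k]_n) : Prop :=
  graded_aut M /\
  exists lam : k, lam != 1 /\ forall d : nat, trace_deg M d = qr_series_coef lam d.

(* mystic reflection: quasi-reflection of order 4 diagonalisable as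
   diag(1,..,1, sqrt(-1), -sqrt(-1)) in some basis y_j = \sum_i P j i x_i. *)
Definition mystic_reflection (M : 'M[k]_n) : Prop :=
  quasi_reflection M /\
  M ^+ 4 = 1%:M /\ (forall m : nat, (0 < m < 4)%N -> M ^+ m != 1%:M) /\
  exists (im : k) (P : 'M[k]_n), im ^+ 2 = -1 /\ P \in unitmx /\
    P *m M = diag_mx (\row_(j < n)
       (if (j.+2 == n)%N then im else if (j.+1 == n)%N then - im else 1)) *m P.

Definition block (i : 'I_n) : {set 'I_n} :=
  [set i' | [forall j, p i j == p i' j]].

(* elementary transformation: a graded automorphism sending each x_i into the
   span of {x_i' : i' in B(i)} (invertibility gives the basis condition). *)
Definition elementary (E : 'M[k]_n) : Prop :=
  graded_aut E /\ forall i j : 'I_n, j \notin block i -> E i j = 0.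

Definition std_mystic (s t : 'I_n) (lam : k) : 'M[k]_n :=
  \matrix_(i, j)
    (if i == s then (if j == t then lam else 0)
     else if i == t then (if j == s then - lam^-1 else 0)
     else (if i == j then 1 else 0)).

End Skew.

(* Main.v *)
Require Import Defs.
From HB Require Import structures.
From mathcomp Require Import all_boot all_order all_algebra.
From mathcomp Require Import ring zify.
Import Order.TTheory GRing.Theory Num.Theory.
Local Open Scope ring_scope.
Set Implicit Arguments. Unset Strict Implicit. Unset Printing Implicit Defensive.

Section Tup.
Variables (k : fieldType) (n : nat) (p : 'I_n -> 'I_n -> k).
Notation i0 := (@ord0 1).
Notation i1 := (@ord_max 1).

Lemma tuple2E (t : 2.-tuple 'I_n) : t = [tuple tnth t i0; tnth t i1].
Proof. by case: t => [[|a [|b [|c s]]] //= h]; apply: val_inj. Qed.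

Lemma tuple1E (t : 1.-tuple 'I_n) : t = [tuple tnth t (@ord0 0)].
Proof. by case: t => [[|a [|b s]] //= h]; apply: val_inj. Qed.

Lemma sum_tuple2 (F : 2.-tuple 'I_n -> k) :
  \sum_(t : 2.-tuple 'I_n) F t = \sum_a \sum_b F [tuple a; b].
Proof.
rewrite pair_big /= (reindex (fun q : 'I_n * 'I_n => [tuple q.1; q.2])) //.
exists (fun t : 2.-tuple 'I_n => (tnth t i0, tnth t i1)).
  by move=> [a b] _.
by move=> t _ /=; rewrite -tuple2E.
Qed.

Lemma sum_tuple1 (F : 1.-tuple 'I_n -> k) :
  \sum_(t : 1.-tuple 'I_n) F t = \sum_a F [tuple a].
Proof.
rewrite (reindex (fun a : 'I_n => [tuple a])) //.
exists (fun t : 1.-tuple 'I_n => tnth t (@ord0 0)); first by [].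
by move=> t _ /=; rewrite -tuple1E.
Qed.

Lemma skew2 (x y : 'I_n) :
  skew_coef p [tuple x; y] = if (y < x)%N then p y x else 1.
Proof.
rewrite /skew_coef; under eq_bigr => a _ do rewrite big_mkcond; rewrite !big_ord_recl !big_ord0 /=.
by rewrite !mul1r !mulr1.
Qed.

Lemma skew1 (x : 'I_n) : skew_coef p [tuple x] = 1.
Proof.
rewrite /skew_coef; under eq_bigr => a _ do rewrite big_mkcond; rewrite !big_ord_recl !big_ord0 /=.
by rewrite !mul1r.
Qed.

Lemma perm2 (T : eqType) (x y a b : T) :
  perm_eq [:: x; y] [:: a; b] = ((x == a) && (y == b)) || ((x == b) && (y == a)).
Proof.
apply/idP/idP; last first.
  case/orP=> /andP[/eqP-> /eqP->] //.
  by rewrite (perm_catC [:: b] [:: a]).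
move=> /perm_mem H.
have := H x; have := H y; have := H a; have := H b; rewrite !inE !eqxx ?orbT /=.
move=> /orP[/eqP bx|/eqP byy] /orP[/eqP ax|/eqP ay] /esym/orP[/eqP ya|/eqP yb] /esym/orP[/eqP xa|/eqP xb]; subst; rewrite ?eqxx ?orbT //.
Qed.

Lemma pc2_lt (Y : 'I_2 -> 'I_n -> k) (a b : 'I_n) : (a < b)%N ->
  prod_coef p Y [tuple a; b] = Y i0 a * Y i1 b + Y i0 b * Y i1 a * p a b.
Proof.
move=> hab; have hba : [tuple a; b] != [tuple b; a].
  apply/eqP=> /(congr1 val) /= [eab _].
  by move: hab; rewrite eab ltnn.
rewrite /prod_coef (bigD1 [tuple a; b]) ?perm_refl //=.
rewrite (bigD1 [tuple b; a]) /=; last first.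
  by rewrite eq_sym hba andbT perm2 !eqxx orbT.
rewrite !big_ord_recr !big_ord0 /= big1 ?addr0; last first.
  move=> v; rewrite (tuple2E v); move: (tnth v i0) (tnth v i1) => x y.
  rewrite perm2 => /andP[/andP[/orP[] /andP[/eqP ex /eqP ey]]]; subst; [by move/eqP | by move=> _ /eqP].
rewrite !skew2 ltnNge (ltnW hab) /= hab !mul1r mulr1.
have -> : widen_ord (leqnSn 1) ord_max = i0 :> 'I_2 by apply: val_inj.
by [].
Qed.

Lemma pc2_eq (Y : 'I_2 -> 'I_n -> k) (a : 'I_n) :
  prod_coef p Y [tuple a; a] = Y i0 a * Y i1 a.
Proof.
rewrite /prod_coef (bigD1 [tuple a; a]) ?perm_refl //=.
rewrite !big_ord_recr !big_ord0 /= big1 ?addr0; last first.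
  move=> v; rewrite (tuple2E v); move: (tnth v i0) (tnth v i1) => x y.
  by rewrite perm2 orbb => /andP[/andP[/eqP ex /eqP ey]]; subst; move/eqP.
rewrite !skew2 ltnn !mul1r mulr1.
have -> : widen_ord (leqnSn 1) ord_max = i0 :> 'I_2 by apply: val_inj.
by [].
Qed.

Lemma pc1 (Y : 'I_1 -> 'I_n -> k) (a : 'I_n) :
  prod_coef p Y [tuple a] = Y ord0 a.
Proof.
rewrite /prod_coef (bigD1 [tuple a]) ?perm_refl //=.
rewrite !big_ord_recr !big_ord0 /= big1 ?addr0; last first.
  move=> v; rewrite (tuple1E v); move: (tnth v ord0) => x.
  move=> /andP[/perm_mem H]; have := H x; rewrite !inE eqxx => /esym/eqP ex; subst.
  by move/eqP.
rewrite skew1 !mul1r mulr1.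
have -> : (@ord_max 0) = ord0 by apply: val_inj.
by [].
Qed.

End Tup.


Section Rel.
Variables (k : fieldType) (n : nat) (p : 'I_n -> 'I_n -> k).
Hypothesis hpd : forall i, p i i = 1.
Hypothesis hpinv : forall i j, p j i = (p i j)^-1.
Hypothesis hp0 : forall i j, p i j != 0.
Notation i0 := (@ord0 1).
Notation i1 := (@ord_max 1).

Lemma Erel (M : 'M[k]_n) : graded_aut p M ->
  forall i j a b, M j a * M i b + p a b * M j b * M i a =
                  p i j * (M i a * M j b + p a b * M i b * M j a).
Proof.
case=> _ H i j.
have key : forall a b : 'I_n, (a < b)%N ->
   M j a * M i b + p a b * M j b * M i a =
                  p i j * (M i a * M j b + p a b * M i b * M j a).
  move=> a b hab; have := H i j [tuple a; b].
  rewrite /pbw /= andbT /le_idx (ltnW hab) => /(_ isT).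
  rewrite !pc2_lt //= => e.
  transitivity (M j a * M i b + M j b * M i a * p a b); first ring.
  by rewrite e; ring.
move=> a b; case: (ltngtP a b) => [hab|hba|/val_inj eab]; first exact: key.
  have := key _ _ hba; rewrite (hpinv a b) => e.
  have pn := hp0 a b.
  apply: (mulfI (invr_neq0 pn)).
  transitivity (M j b * M i a + (p a b)^-1 * M j a * M i b); first by field; exact: pn.
  by rewrite e; field; exact: pn.
subst b; have := H i j [tuple a; a].
rewrite /pbw /= andbT /le_idx leqnn => /(_ isT).
rewrite !pc2_eq /= hpd => e.
transitivity ((1+1) * (M j a * M i a)); first ring.
by rewrite e; ring.
Qed.
End Rel.

Section Tr.
Variables (k : fieldType) (n : nat) (p : 'I_n -> 'I_n -> k).

Lemma trace1 (M : 'M[k]_n) : trace_deg p M 1 = \sum_a M a a.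
Proof.
rewrite /trace_deg (eq_bigl predT); last first.
  by move=> s; rewrite (tuple1E s).
rewrite sum_tuple1; apply: eq_bigr => a _.
by rewrite pc1.
Qed.

Lemma trace2 (M : 'M[k]_n) : trace_deg p M 2 =
  \sum_(a : 'I_n) M a a ^+ 2 + \sum_(a : 'I_n) \sum_(b : 'I_n | (a < b)%N) (M a a * M b b + p a b * M a b * M b a).
Proof.
rewrite /trace_deg big_mkcond sum_tuple2 -big_split /=; apply: eq_bigr => a _.
rewrite (bigD1 a) //= /pbw /= /le_idx leqnn pc2_eq /= expr2; congr (_ + _).
rewrite big_mkcond [RHS]big_mkcond; apply: eq_bigr => b _ /=.
case: (ltngtP a b) => [hab|hba|/val_inj eab].
- case: eqP => [e|_]; first by move: hab; rewrite e ltnn.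
  rewrite pc2_lt // !(tnth_nth a) /=; ring.
- by rewrite /= if_same.
- by subst; rewrite eqxx.
Qed.
End Tr.

Section QR.
Variable (k : fieldType).
Lemma qr1 (n : nat) (lam : k) : (2 <= n)%N ->
  qr_series_coef n lam 1 = lam + n%:R - 1.
Proof.
case: n => [|[|m]] // _.
rewrite /qr_series_coef !big_ord_recr big_ord0 /= add0r !subSS !subn0.
rewrite add0n add1n binSn binn expr0 expr1 mul1r -[m.+2]addn1 -[m.+1]addn1 !natrD; ring.
Qed.

Lemma binm2 m : ('C(m.+2, m) * 2 = m.+2 * m.+1)%N.
Proof.
elim: m => [//|m IH].
rewrite binS binSn; nia.
Qed.

Lemma qr2 (n : nat) : (2 <= n)%N ->
  qr_series_coef n (-1 : k) 2 * 2 = n%:R ^+ 2 - 3 * n%:R + 4.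
Proof.
case: n => [|[|m]] // _.
rewrite /qr_series_coef !big_ord_recr big_ord0 /= add0r !subSS !subn0.
rewrite add0n add1n binSn binn add2n.
have e : ('C(m.+2, m)%:R * 2 = m.+2%:R * m.+1%:R :> k).
  by rewrite -!natrM binm2.
rewrite expr0 expr1 sqrrN expr1n !mul1r mulN1r !mulrDl e.
rewrite -[m.+2]addn1 -[m.+1]addn1 !natrD; ring.
Qed.
End QR.

Section Eig.
Variables (k : fieldType) (n : nat).

Lemma eig_rep (M P : 'M[k]_n) (im : k) : (2 <= n)%N -> P \in unitmx ->
  P *m M = diag_mx (\row_(j < n)
       (if (j.+2 == n)%N then im else if (j.+1 == n)%N then - im else 1)) *m P ->
  exists x y z w : 'I_n -> k,
   [/\ forall a b, M a b = (a == b)%:R + x a * y b + z a * w b,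
       \sum_a y a * x a = im - 1, \sum_a w a * z a = - im - 1,
       \sum_a y a * z a = 0 & \sum_a w a * x a = 0].
Proof.
move=> hn hP hM.
have hl1 : (n - 2 < n)%N by lia.
have hl2 : (n - 1 < n)%N by lia.
set l1 := Ordinal hl1; set l2 := Ordinal hl2.
have l12 : l1 != l2 by rewrite -val_eqE /=; lia.
set Pi := invmx P.
have eM : M = Pi *m (diag_mx (\row_(j < n)
       (if (j.+2 == n)%N then im else if (j.+1 == n)%N then - im else 1)) *m P).
  by rewrite -hM mulKmx.
have dl1 : (l1.+2 == n)%N by rewrite /= ; apply/eqP; lia.
have dl2 : (l2.+2 == n)%N = false by apply/negbTE; rewrite /=; apply/eqP; lia.
have dl2' : (l2.+1 == n)%N by rewrite /=; apply/eqP; lia.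
have drest : forall l : 'I_n, l != l1 -> l != l2 -> (l.+2 == n)%N = false /\ (l.+1 == n)%N = false.
  move=> l; rewrite -!val_eqE /= => h1 h2; split; apply/negbTE/eqP; lia.
have PPi : forall l l', \sum_a P l a * Pi a l' = (l == l')%:R.
  by move=> l l'; have /matrixP/(_ l l') := mulmxV hP; rewrite !mxE.
exists (fun a => Pi a l1), (fun b => (im - 1) * P l1 b), (fun a => Pi a l2),
  (fun b => (- im - 1) * P l2 b); split.
- move=> a b.
  have e1 : (a == b)%:R = \sum_l Pi a l * P l b :> k.
    by have /matrixP/(_ a b) := mulVmx hP; rewrite !mxE.
  rewrite {1}eM mul_diag_mx mxE e1.
  under eq_bigr do rewrite !mxE.
  set S := \sum_l _ * P l b.
  apply/eqP; rewrite -addrA addrC -subr_eq; apply/eqP.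
  rewrite /S -sumrB.
  rewrite (bigD1 l1) // (bigD1 l2) /=; last by rewrite eq_sym.
  rewrite big1 ?addr0; last first.
    move=> l /andP[h1 h2]; have [-> ->] := drest l h1 h2.
    by rewrite mul1r subrr.
  rewrite dl1 dl2 dl2'.
  ring.
- have e : \sum_a P l1 a * Pi a l1 = 1 by rewrite PPi eqxx.
  by rewrite -[RHS]mulr1 -e mulr_sumr; apply: eq_bigr => a _; ring.
- have e : \sum_a P l2 a * Pi a l2 = 1 by rewrite PPi eqxx.
  by rewrite -[RHS]mulr1 -e mulr_sumr; apply: eq_bigr => a _; ring.
- have e : \sum_a P l1 a * Pi a l2 = 0 by rewrite PPi (negbTE l12).
  transitivity ((im - 1) * \sum_a P l1 a * Pi a l2); last by rewrite e mulr0.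
  by rewrite mulr_sumr; apply: eq_bigr => a _; ring.
- have e : \sum_a P l2 a * Pi a l1 = 0 by rewrite PPi eq_sym (negbTE l12).
  transitivity ((- im - 1) * \sum_a P l2 a * Pi a l1); last by rewrite e mulr0.
  by rewrite mulr_sumr; apply: eq_bigr => a _; ring.
Qed.
End Eig.

Section Sums.
Variables (k : fieldType) (n : nat).

Lemma sum_delta (a : 'I_n) (F : 'I_n -> k) : \sum_b (a == b)%:R * F b = F a.
Proof.
rewrite (bigD1 a) //= big1 ?eqxx ?mul1r ?addr0 //.
by move=> b hb; rewrite eq_sym (negbTE hb) mul0r.
Qed.

Lemma sum_one (c : 'I_n) (F : 'I_n -> k) : (forall l, l != c -> F l = 0) ->
  \sum_l F l = F c.
Proof. by move=> h; rewrite (bigD1 c) //= big1 ?addr0 // => l /h. Qed.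

Lemma sum_sym (f : 'I_n -> 'I_n -> k) : (forall a b, f a b = f b a) ->
  \sum_a \sum_b f a b = \sum_a f a a + 2 * \sum_(a : 'I_n) \sum_(b : 'I_n | (a < b)%N) f a b.
Proof.
move=> fs.
have e1 : forall a : 'I_n, \sum_b f a b = f a a + \sum_(b : 'I_n | (a < b)%N) f a b
                                     + \sum_(b : 'I_n | (b < a)%N) f a b.
  move=> a; rewrite (bigD1 a) //= -addrA; congr (_ + _).
  rewrite (bigID (fun b : 'I_n => (a < b)%N)) /=; congr (_ + _).
    apply: eq_bigl => b; case: (ltngtP a b) => [h|h|/val_inj ->]; rewrite ?eqxx ?andbF ?andbT //=.
    by apply/eqP => e; move: h; rewrite e ltnn.
  apply: eq_bigl => b; case: (ltngtP a b) => [h|h|/val_inj ->]; rewrite ?eqxx ?andbF ?andbT //=.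
  by apply/eqP => e; move: h; rewrite e ltnn.
rewrite (eq_bigr _ (fun a _ => e1 a)) !big_split /=.
have e2 : \sum_(a : 'I_n) \sum_(b : 'I_n | (b < a)%N) f a b = \sum_(a : 'I_n) \sum_(b : 'I_n | (a < b)%N) f a b.
  rewrite (exchange_big_dep predT) //=; apply: eq_bigr => a _.
  by apply: eq_bigr => b _; rewrite fs.
rewrite e2; ring.
Qed.
End Sums.

Section Main.
Variables (k : fieldType) (n : nat) (p : 'I_n -> 'I_n -> k).
Hypothesis hc : forall m : nat, (m%:R == 0 :> k) = (m == 0)%N.
Hypothesis hpd : forall i, p i i = 1.
Hypothesis hpinv : forall i j, p j i = (p i j)^-1.
Hypothesis hp0 : forall i j, p i j != 0.
Hypothesis hn : (2 <= n)%N.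
Variable M : 'M[k]_n.
Hypothesis hM : graded_aut p M.
Variables (im : k) (x y z w : 'I_n -> k).
Hypothesis him : im ^+ 2 = -1.
Hypothesis hrep : forall a b, M a b = (a == b)%:R + x a * y b + z a * w b.
Hypothesis d1 : \sum_a y a * x a = im - 1.
Hypothesis d2 : \sum_a w a * z a = - im - 1.
Hypothesis d3 : \sum_a y a * z a = 0.
Hypothesis d4 : \sum_a w a * x a = 0.
Variable lam : k.
Hypothesis hq : forall d, trace_deg p M d = qr_series_coef n lam d.

Definition R a b := x a * y b + z a * w b.

Lemma sum1 : \sum_(a : 'I_n) (1 : k) = n%:R.
Proof. by rewrite sumr_const card_ord. Qed.

Lemma trR : \sum_a R a a = -2.
Proof.
rewrite /R big_split /=.
rewrite (eq_bigr (fun a => y a * x a)) ?d1; last by move=> a _; ring.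
rewrite (eq_bigr (fun a => w a * z a)) ?d2; last by move=> a _; ring.
ring.
Qed.

Lemma trR2 : \sum_a \sum_b R a b * R b a = 0.
Proof.
have -> : \sum_a \sum_b R a b * R b a =
   (\sum_a y a * x a) * (\sum_b y b * x b) + (\sum_a w a * x a) * (\sum_b y b * z b)
 + (\sum_a y a * z a) * (\sum_b w b * x b) + (\sum_a w a * z a) * (\sum_b w b * z b).
  rewrite !big_distrlr -!big_split; apply: eq_bigr => a _.
  rewrite -!big_split; apply: eq_bigr => b _; rewrite /R /=; ring.
rewrite d1 d2 d3 d4; rewrite !mul0r !addr0.
have e : im * im = -1 by rewrite -expr2.
transitivity ((1 + 1) * (im * im) + (1 + 1)); first ring.
by rewrite e; ring.
Qed.

Lemma MR a b : M a b = (a == b)%:R + R a b.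
Proof. by rewrite hrep /R addrA. Qed.

Lemma trM : \sum_a M a a = n%:R - 2.
Proof.
rewrite (eq_bigr (fun a => 1 + R a a)); last by move=> a _; rewrite MR eqxx.
by rewrite big_split /= sum1 trR.
Qed.

Lemma trM2 : \sum_a \sum_b M a b * M b a = n%:R - 4.
Proof.
have e : forall a, \sum_b M a b * M b a = 1 + (1 + 1) * R a a + \sum_b R a b * R b a.
  move=> a.
  rewrite (eq_bigr (fun b => (a == b)%:R * ((a == b)%:R + R a b + R b a) + R a b * R b a)); last first.
    by move=> b _; rewrite !MR (eq_sym b a); ring.
  rewrite big_split /= sum_delta eqxx /= mulr1n; ring.
rewrite (eq_bigr _ (fun a _ => e a)) !big_split /= sum1 -mulr_sumr trR trR2; ring.
Qed.

Lemma two_neq0 : (2 : k) != 0.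
Proof. by rewrite hc. Qed.

Lemma lamE : lam = -1.
Proof.
have := hq 1; rewrite trace1 trM qr1 // => e.
apply/eqP; rewrite -subr_eq0; apply/eqP.
transitivity (- (n%:R - 2 - (lam + n%:R - 1))); first ring.
by rewrite e subrr oppr0.
Qed.

Definition U := \sum_(a : 'I_n) \sum_(b : 'I_n | (a < b)%N) (p a b - 1) * M a b * M b a.

Lemma U2 : U = 2.
Proof.
have h2 := hq 2; rewrite trace2 lamE in h2.
have q2 := qr2 k hn.
set A := \sum_a M a a ^+ 2 in h2.
set B := \sum_(a : 'I_n) \sum_(b : 'I_n | (a < b)%N) M a a * M b b.
set C := \sum_(a : 'I_n) \sum_(b : 'I_n | (a < b)%N) M a b * M b a.
set D := \sum_(a : 'I_n) \sum_(b : 'I_n | (a < b)%N) p a b * M a b * M b a.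
have eT : \sum_(a : 'I_n) \sum_(b : 'I_n | (a < b)%N) (M a a * M b b + p a b * M a b * M b a) = B + D.
  by rewrite -big_split; apply: eq_bigr => a _; rewrite -big_split.
have eU : U = D - C.
  rewrite /U /D /C -sumrB; apply: eq_bigr => a _; rewrite -sumrB.
  by apply: eq_bigr => b _; ring.
have et : (\sum_a M a a) ^+ 2 = A + 2 * B.
  rewrite expr2 big_distrlr /= (@sum_sym _ _ (fun a b => M a a * M b b)) /A /B; last by move=> *; ring.
  by congr (_ + _); apply: eq_bigr => a _; rewrite expr2.
have es : \sum_a \sum_b M a b * M b a = A + 2 * C.
  rewrite (@sum_sym _ _ (fun a b => M a b * M b a)) /A /C; last by move=> *; ring.
  by congr (_ + _); apply: eq_bigr => a _; rewrite expr2.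
rewrite trM in et; rewrite trM2 in es; rewrite eT in h2.
apply: (mulfI two_neq0).
rewrite eU.
have h2' : (A + (B + D)) * 2 = n%:R ^+ 2 - 3 * n%:R + 4 by rewrite h2 q2.
transitivity ((A + (B + D)) * 2 - (A + 2 * B) - (A + 2 * C)); first ring.
rewrite h2' -et -es; ring.
Qed.

Let E := Erel hpd hpinv hp0 hM.

Lemma pm1 (a b : 'I_n) : p a b != 1 -> M a b * M b a != 0 -> p a b = -1.
Proof.
move=> h1 h2; have e := E a b a b.
have : (M a b * M b a) * (1 - p a b ^+ 2) = 0.
  transitivity (M b a * M a b + p a b * M b b * M a a - p a b * (M a a * M b b + p a b * M a b * M b a)); first ring.
  by rewrite e subrr.
move/eqP; rewrite mulf_eq0 (negbTE h2) /= subr_eq0 eq_sym sqrf_eq1 (negbTE h1) /=.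
by move/eqP.
Qed.

Lemma pair_ex : exists i j : 'I_n,
  [/\ (i < j)%N, (p i j - 1) * M i j * M j i != 0 & M i j * M j i != 1].
Proof.
case: (boolP [exists i : 'I_n, exists j : 'I_n, [&& (i < j)%N, (p i j - 1) * M i j * M j i != 0 & M i j * M j i != 1]]).
  by case/existsP=> i /existsP[j /and3P[h1 h2 h3]]; exists i, j.
rewrite negb_exists => /forallP H.
have tE : forall a b : 'I_n, (a < b)%N ->
   (p a b - 1) * M a b * M b a = - 2 * (((p a b - 1) * M a b * M b a != 0) : nat)%:R.
  move=> a b hab; case: eqP => [-> |/eqP t0]; first by rewrite mulr0.
  have := H a; rewrite negb_exists => /forallP/(_ b); rewrite hab t0 /= negbK => /eqP m1.
  have pa : p a b != 1 by apply: contra t0 => /eqP ->; rewrite subrr !mul0r.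
  have mm : M a b * M b a != 0 by rewrite m1 oner_eq0.
  rewrite (pm1 pa mm) -mulrA m1; rewrite /=; ring.
have := U2; rewrite /U.
under eq_bigr do under eq_bigr => b hb do rewrite tE //.
under eq_bigr do rewrite -mulr_sumr -natr_sum.
rewrite -mulr_sumr -natr_sum => e.
move: e; set N := (\sum_i _)%N => e.
have : ((2 + 2 * N)%N%:R == 0 :> k).
  rewrite natrD natrM; apply/eqP.
  transitivity (2 + (-2 * N%:R) * (-1) : k); first ring.
  by rewrite e; ring.
by rewrite hc.
Qed.

Lemma four_neq0 : (4 : k) != 0.
Proof. by rewrite hc. Qed.

Lemma F1 r s a : p r s = -1 -> M s a * M r a = 0.
Proof.
move=> prs; have e := E r s a a; rewrite hpd prs in e.
suff : 4 * (M s a * M r a) = 0 by move/eqP; rewrite mulf_eq0 (negbTE four_neq0) /= => /eqP.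
transitivity ((M s a * M r a + 1 * M s a * M r a) -
   (-1 * (M r a * M s a + 1 * M r a * M s a))); first ring.
by rewrite e subrr.
Qed.

Lemma cancel_eq (u v c : k) : c != 0 -> u * c = v * c -> u = v.
Proof. by move=> hc0 /(mulIf hc0). Qed.

Lemma diag0 r s c : p r s = -1 -> M r r = 0 -> M s r != 0 -> M r c != 0 -> M c c = 0.
Proof.
move=> prs hrr hsr hrc; have e := E r s c r; rewrite hrr prs in e.
have pcr : p c r = -1.
  apply: (@cancel_eq _ _ (M s r * M r c)); first by rewrite mulf_neq0.
  transitivity (M s c * 0 + p c r * M s r * M r c); first ring.
  by rewrite e; ring.
have prc : p r c = -1 by rewrite hpinv pcr invrN1.
by have /eqP := @F1 r c c prc; rewrite mulf_eq0 (negbTE hrc) orbF => /eqP.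
Qed.

Lemma sidezero r q s : p r q = -1 -> M r r = 0 -> M r q != 0 -> M q r != 0 ->
  M q s = 0 -> M s s = 1 -> M s r = 0.
Proof.
move=> prq hrr hrq hqr hqs hss; apply/eqP; apply: contraT => hsr.
have psq : p s q = 1.
  have e := E s q r r; rewrite hpd in e.
  apply: (@cancel_eq _ _ (2 * M s r * M q r)).
    by rewrite !mulf_neq0 ?two_neq0.
  transitivity (p s q * (M s r * M q r + 1 * M s r * M q r)); first ring.
  by rewrite -e; ring.
have psr : p s r = 1.
  have e := E s q s r; rewrite hqs hss psq in e.
  apply: (@cancel_eq _ _ (M q r)) => //.
  transitivity (0 * M s r + p s r * M q r * 1); first ring.
  by rewrite e; ring.
have e := E s r r q; rewrite hrr psr prq in e.
have : (2 * (M s r * M r q) == 0).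
  apply/eqP; transitivity (1 * (M s r * M r q + -1 * M s q * 0) - (0 * M s q + -1 * M r q * M s r)); first ring.
  by rewrite -e subrr.
by rewrite !mulf_eq0 (negbTE two_neq0) (negbTE hsr) (negbTE hrq).
Qed.

Lemma minor (r1 r2 r3 c1 c2 c3 : 'I_n) :
  R r3 c3 * (R r1 c1 * R r2 c2 - R r1 c2 * R r2 c1) =
  - R r1 c3 * (R r2 c1 * R r3 c2 - R r2 c2 * R r3 c1)
  + R r2 c3 * (R r1 c1 * R r3 c2 - R r1 c2 * R r3 c1).
Proof. rewrite /R; ring. Qed.

Lemma RE a b : R a b = M a b - (a == b)%:R.
Proof. by rewrite MR; ring. Qed.

Lemma natr_eq2 (N : nat) : (N%:R = 2 :> k) -> N = 2%N.
Proof.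
move=> e.
have [hN|hN] := leqP N 2.
  have : ((2 - N)%N%:R == 0 :> k) by rewrite natrB // e subrr.
  by rewrite hc => /eqP h; apply/eqP; rewrite eqn_leq hN /=; lia.
have : ((N - 2)%N%:R == 0 :> k) by rewrite natrB ?e ?subrr //; lia.
by rewrite hc => /eqP h; lia.
Qed.

Lemma structure : exists (i j : 'I_n) (mu nu : k),
  [/\ i != j, p i j = -1, mu * nu != 1, mu != 0 &
      forall a b, M a b = if a == i then (if b == j then mu else 0)
                          else if a == j then (if b == i then nu else 0)
                          else (a == b)%:R].
Proof.
have [i [j [hij ht h1]]] := pair_ex.
set mu := M i j in ht h1 *; set nu := M j i in ht h1 *.
have ij : i != j by rewrite -val_eqE /= neq_ltn hij.
have ji : j != i by rewrite eq_sym.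
have pa : p i j != 1 by apply: contra ht => /eqP ->; rewrite subrr !mul0r.
have mm : mu * nu != 0 by move: ht; rewrite -mulrA mulf_eq0 negb_or => /andP[].
have mu0 : mu != 0 by move: mm; rewrite mulf_eq0 negb_or => /andP[].
have nu0 : nu != 0 by move: mm; rewrite mulf_eq0 negb_or => /andP[].
have pij := pm1 pa mm.
have pji : p j i = -1 by rewrite hpinv pij invrN1.
have Mjj : M j j = 0.
  by have /eqP := @F1 i j j pij; rewrite mulf_eq0 (negbTE mu0) orbF => /eqP.
have Mii : M i i = 0.
  by have /eqP := @F1 i j i pij; rewrite mulf_eq0 (negbTE nu0) /= => /eqP.
have key : forall s t, s != i -> s != j -> t != i -> t != j ->
   M i t = 0 -> M j t = 0 -> M s t = (s == t)%:R.
  move=> s t si sj ti tj hit hjt.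
  have Rit : R i t = 0 by rewrite RE hit eq_sym (negbTE ti) subr0.
  have Rjt : R j t = 0 by rewrite RE hjt eq_sym (negbTE tj) subr0.
  have Rii : R i i = -1 by rewrite RE Mii eqxx sub0r.
  have Rjj : R j j = -1 by rewrite RE Mjj eqxx sub0r.
  have Rij : R i j = mu by rewrite RE (negbTE ij) subr0.
  have Rji : R j i = nu by rewrite RE (negbTE ji) subr0.
  have := minor i j s i j t; rewrite Rit Rjt Rii Rjj Rij Rji => e.
  have : R s t * (1 - mu * nu) = 0.
    by transitivity (R s t * (-1 * -1 - mu * nu)); [ring | rewrite e; ring].
  move/eqP; rewrite mulf_eq0 => /orP[]; last by rewrite subr_eq0 eq_sym (negbTE h1).
  by rewrite RE subr_eq0 => /eqP.
pose bb (a : 'I_n) : nat := [|| a == i, a == j, M i a != 0 | M j a != 0].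
have Rd : forall a, R a a = - (bb a)%:R.
  move=> a; rewrite /bb RE.
  case: (a =P i) => [->|/eqP ai] /=; first by rewrite Mii eqxx mulr1n sub0r.
  case: (a =P j) => [->|/eqP aj] /=; first by rewrite Mjj eqxx mulr1n sub0r.
  case: (boolP (M i a != 0)) => [hia|] /=.
    by rewrite (diag0 pij Mii nu0 hia) eqxx mulr1n sub0r.
  rewrite negbK => /eqP hia.
  case: (boolP (M j a != 0)) => [hja|] /=.
    by rewrite (diag0 pji Mjj mu0 hja) eqxx mulr1n sub0r.
  rewrite negbK => /eqP hja.
  by rewrite (key a a ai aj ai aj hia hja) subrr oppr0.
have sb : (\sum_a bb a = 2)%N.
  apply: natr_eq2; rewrite natr_sum.
  apply: oppr_inj; rewrite -trR -sumrN; apply: eq_bigr => a _; by rewrite Rd.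
have zero : forall c, c != i -> c != j -> M i c = 0 /\ M j c = 0.
  move=> c ci cj; move: sb; rewrite (bigD1 i) // (bigD1 j) /=; last by rewrite ji.
  rewrite /bb !eqxx /= orbT /= => h.
  move: h; set S := (\sum_(a | _) _)%N => h.
  have : (S == 0)%N by apply/eqP; lia.
  rewrite /S sum_nat_eq0 => /forallP/(_ c); rewrite ci cj /= /bb (negbTE ci) (negbTE cj) /=.
  by rewrite eqb0 negb_or !negbK => /andP[/eqP -> /eqP ->].
have Mss : forall s, s != i -> s != j -> M s s = 1.
  move=> s si sj; have [h1' h2'] := zero s si sj.
  by rewrite (key s s si sj si sj h1' h2') eqxx.
exists i, j, mu, nu; split => // a b.
case: (a =P i) => [->|/eqP ai].
  case: (b =P j) => [->|/eqP bj] //.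
  case: (b =P i) => [->|/eqP bi] //.
  by have [] := zero b bi bj.
case: (a =P j) => [->|/eqP aj].
  case: (b =P i) => [->|/eqP bi] //.
  case: (b =P j) => [->|/eqP bj] //.
  by have [] := zero b bi bj.
case: (b =P i) => [->|/eqP bi].
  have [_ hja] := zero a ai aj.
  by rewrite (sidezero pij Mii mu0 nu0 hja (Mss a ai aj)) (negbTE ai).
case: (b =P j) => [->|/eqP bj].
  have [hia _] := zero a ai aj.
  by rewrite (sidezero pji Mjj nu0 mu0 hia (Mss a ai aj)) (negbTE aj).
have [h1' h2'] := zero b bi bj.
exact: key.
Qed.
End Main.

Section Diag.
Variables (k : fieldType) (n : nat) (p : 'I_n -> 'I_n -> k).
Hypothesis hpd : forall i, p i i = 1.
Hypothesis hpinv : forall i j, p j i = (p i j)^-1.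
Hypothesis hp0 : forall i j, p i j != 0.

Lemma diag_rel (e : 'I_n -> k) (i j : 'I_n) (s : 2.-tuple 'I_n) : pbw s ->
  prod_coef p (fun a u => diag_mx (\row_c e c) (if val a == 0%N then j else i) u) s =
  p i j * prod_coef p (fun a u => diag_mx (\row_c e c) (if val a == 0%N then i else j) u) s.
Proof.
rewrite (tuple2E s); move: (tnth s _) (tnth s _) => a b.
rewrite /pbw /= andbT /le_idx leq_eqVlt => /orP[/eqP/val_inj eab|hab].
  subst b; rewrite !pc2_eq /= !mxE.
  case: (eqVneq i j) => [<-|ij]; first by rewrite hpd mul1r.
  case: (eqVneq i a) => [<-|ia]; first by rewrite (eq_sym j i) (negbTE ij) !mulr0n !mulr0 !mul0r.
  by rewrite /= ?mulr0n ?mulr0 ?mul0r ?mulr0.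
have ab : a != b by apply: contraTneq hab => ->; rewrite ltnn.
rewrite !pc2_lt //= !mxE.
case: (eqVneq i j) => [<-|ij]; first by rewrite hpd mul1r.
have ji : (j == i) = false by rewrite eq_sym (negbTE ij).
have [ja|ja] := eqVneq j a; have [ib|ib] := eqVneq i b;
have [ia|ia] := eqVneq i a; have [jb|jb] := eqVneq j b;
subst => //=; rewrite ?eqxx ?ji ?(negbTE ij) /= ?mulr0n ?mulr1n ?mulr0 ?mul0r ?addr0 ?add0r //=;
try ring.
all: try by rewrite eqxx in ij.
rewrite (hpinv a b); field; exact: hp0.
Qed.
End Diag.

Unset Implicit Arguments.
Set Strict Implicit.

Theorem proposition3p1 (k : closedFieldType) (n : nat)
    (p : 'I_n -> 'I_n -> k)
    (hchar : [pchar k] =i pred0)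
    (hn : (2 <= n)%N)
    (hp0 : forall i j, p i j != 0)
    (hpd : forall i, p i i = 1)
    (hpinv : forall i j, p j i = (p i j)^-1)
    (tau : 'M[k]_n)
    (htau : mystic_reflection p tau) :
  (exists (i j : 'I_n) (lam : k),
     [/\ i != j, lam != 0, p i j = -1,
         (forall s, s != i -> s != j -> p i s = p j s)
       & [/\ block p i = [set i], block p j = [set j]
            & tau = std_mystic i j lam]]) /\
  (exists (i j : 'I_n) (E : 'M[k]_n),
     [/\ i != j, p i j = -1,
         (forall s, s != i -> s != j -> p i s = p j s),
         elementary p E
       & invmx E *m tau *m E = std_mystic i j 1]).
Proof.
have hc := (pcharf0P k).1 hchar.
have two0 : (2 : k) != 0 by rewrite hc.
case: htau => [[hgr [lam [hl hq]]] [h4 [hord [im [P [him [hP hPM]]]]]]].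
have [x [y [z [w [hrep d1 d2 d3 d4]]]]] := eig_rep hn hP hPM.
have [i [j [mu [nu [ij pij h1 mu0 hform]]]]] :=
  structure hc hpd hpinv hp0 hn hgr him hrep d1 d2 d3 d4 hq.
have ji : j != i by rewrite eq_sym.
have M2 : forall b, (tau ^+ 2) i b = mu * nu * (b == i)%:R.
  move=> b; rewrite expr2 -mulmxE mxE (@sum_one _ _ j); last first.
    by move=> l lj; rewrite hform eqxx (negbTE lj) mul0r.
  rewrite !hform eqxx (negbTE ji) eqxx.
  by case: (b =P i) => _; rewrite ?mulr1 ?mulr0.
have mn2 : (mu * nu) ^+ 2 = 1.
  have := congr1 (fun A : 'M[k]_n => A i i) h4.
  rewrite (_ : 4 = 2 + 2)%N // exprD -mulmxE !mxE eqxx (@sum_one _ _ i); last first.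
    by move=> l li; rewrite M2 (negbTE li) mulr0 mul0r.
  by rewrite !M2 eqxx mulr1 expr2.
have mn : mu * nu = -1.
  by move/eqP: mn2; rewrite sqrf_eq1 (negbTE h1) /= => /eqP.
have nuE : nu = - mu^-1.
  by apply: (mulfI mu0); rewrite mn mulrN divff.
have pji : p j i = -1 by rewrite hpinv pij invrN1.
have pis : forall s, s != i -> s != j -> p i s = p j s.
  move=> s si sj.
  have e := Erel hpd hpinv hp0 hgr i s j s.
  have tsj : tau s j = 0 by rewrite hform (negbTE si) (negbTE sj).
  have tis : tau i s = 0 by rewrite hform eqxx (negbTE sj).
  have tss : tau s s = 1 by rewrite hform (negbTE si) (negbTE sj) eqxx.
  have tij : tau i j = mu by rewrite hform !eqxx.
  rewrite tsj tis tss tij in e.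
  apply: (mulIf mu0); transitivity (p i s * (mu * 1 + p j s * 0 * 0)); first ring.
  by rewrite -e; ring.
have m1 : (-1 : k) != 1.
  apply/eqP => e; move: two0; rewrite (_ : (2 : k) = 1 - -1); last by ring.
  by rewrite e subrr eqxx.
have bi : block p i = [set i].
  apply/setP => t; rewrite !inE.
  case: (eqVneq t i) => [->|ti]; first by apply/forallP => u.
  apply/negbTE/negP => /forallP H.
  case: (eqVneq t j) => [tj|tj].
    by subst t; move: (H j); rewrite pij hpd (negbTE m1).
  move: (H t) (H j); rewrite hpd => /eqP pit /eqP.
  rewrite pij hpinv -pis // pit invr1 => /eqP.
  by rewrite (negbTE m1).
have bj : block p j = [set j].
  apply/setP => t; rewrite !inE.
  case: (eqVneq t j) => [->|tj]; first by apply/forallP => u.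
  apply/negbTE/negP => /forallP H.
  case: (eqVneq t i) => [ti|ti].
    by subst t; move: (H i); rewrite pji hpd (negbTE m1).
  move: (H t) (H i); rewrite hpd => /eqP pjt /eqP.
  rewrite pji hpinv pis // pjt invr1 => /eqP.
  by rewrite (negbTE m1).
have tauE : tau = std_mystic i j mu.
  apply/matrixP => a b; rewrite hform mxE nuE.
  case: (a == i) => //; case: (a == j) => //.
  by case: (a == b).
split.
  exists i, j, mu; split => //.
pose e := fun c : 'I_n => if c == i then mu else 1.
pose e' := fun c : 'I_n => if c == i then mu^-1 else 1.
set Ed := diag_mx (\row_c e c).
set Ed' := diag_mx (\row_c e' c).
have h11 : Ed' *m Ed = 1%:M.
  apply/matrixP => a b; rewrite mulmx_diag !mxE /e /e'.
  by case: (a == i); rewrite ?mulVf ?mulr1.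
have [hEu' hEu] := mulmx1_unit h11.
have invE : invmx Ed = Ed'.
  by rewrite -[LHS]mul1mx -h11 -mulmxA mulmxV // mulmx1.
exists i, j, Ed; split => //.
  split; first split => //.
    by move=> a b s' hs; apply: diag_rel.
  move=> a b; rewrite !mxE.
  case: (eqVneq a b) => [<-|ab]; last by rewrite mulr0n.
  by move=> /negP []; rewrite inE; apply/forallP.
rewrite invE tauE mul_diag_mx mul_mx_diag.
apply/matrixP => a b; rewrite !mxE /e /e'.
have [ai|ai] := eqVneq a i.
  subst a; rewrite ?eqxx.
  have [hbj|hbj] := eqVneq b j.
    by subst b; rewrite ?eqxx ?(negbTE ji) mulr1 mulVf.
  by rewrite ?(negbTE hbj) mulr0 mul0r.
rewrite ?(negbTE ai) mul1r.
have [aj|aj] := eqVneq a j.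
  subst a; rewrite ?eqxx.
  have [bi'|bi'] := eqVneq b i.
    by subst b; rewrite ?eqxx invr1 mulNr mulVf.
  by rewrite ?(negbTE bi') mul0r.
rewrite ?(negbTE aj).
have [bi'|bi'] := eqVneq b i.
  by subst b; rewrite ?(eq_sym i a) ?(negbTE ai) mul0r.
by rewrite mulr1.
Qed.
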